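(* For every $\omega\in\{0,1\}^n$, the stabilization time of $\omega$ equals $\mathrm{Depth}(Y(\omega))$.
   Context: $\mathbb N=\{1,2,\dots\}$. A Young diagram is a finite down-closed set $Y\subseteq\mathbb N\times\mathbb N$ (i.e. $(i,j)\in Y$, $i'\le i$, $j'\le j$ imply $(i',j')\in Y$). For $\omega\in\{0,1\}^n$ with $U$ ones, $Y(\omega)=\{(i,j)\in\mathbb N\times\mathbb N: i\le n-U,\ j\le\text{the number of 1's of }\omega\text{ after the }i\text{-th 0 of }\omega\}$. For nonempty $Y$, $\mathrm{Depth}(Y)=\max\{i+j-1:(i,j)\in Y\}$; $\mathrm{Depth}(\emptyset)=0$. One step of the evolution replaces simultaneously every occurrence of the consecutive substring ''01'' by ''10''; the stabilization time is the number of steps needed to reach a string of the form $1\cdots10\cdots0$. *)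

(* Defs.v *)
(* Binary strings are [seq bool]: 0 = false, 1 = true. *)
From mathcomp Require Import all_boot.
Set Implicit Arguments. Unset Strict Implicit. Unset Printing Implicit Defensive.

(* One step of the evolution: replace simultaneously every occurrence of the
   consecutive substring "01" by "10".  Occurrences of "01" never overlap,
   so a left-to-right scan performs all replacements simultaneously. *)
Fixpoint step (s : seq bool) : seq bool :=
  match s with
  | false :: true :: s' => true :: false :: step s'
  | x :: s' => x :: step s'
  | [::] => [::]
  end.

Definition stable (s : seq bool) : Prop :=
  exists a b, s = nseq a true ++ nseq b false.

Definition is_stab_time (w : seq bool) (t : nat) : Prop :=
  stable (iter t step w) /\ forall k, k < t -> ~ stable (iter k step w).

Fixpoint ones_after_zeros (w : seq bool) : seq nat :=
  match w with
  | [::] => [::]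
  | false :: s => count id s :: ones_after_zeros s
  | true :: s => ones_after_zeros s
  end.

Definition ones_after (w : seq bool) (i : nat) : nat :=
  nth 0 (ones_after_zeros w) i.-1.

Definition Yw (w : seq bool) : seq (nat * nat) :=
  [seq (i, j) | i <- iota 1 (size w - count id w), j <- iota 1 (ones_after w i)].

Definition Depth (Y : seq (nat * nat)) : nat :=
  \max_(p <- Y) (p.1 + p.2 - 1).

(* Main.v *)
Require Import Defs.
From mathcomp Require Import all_boot.
From mathcomp Require Import zify.

Fixpoint H (w : seq bool) : nat :=
  match w with
  | [::] => 0
  | true :: s => H s
  | false :: s => if count id s == 0 then 0 else maxn (count id s) (H s).+1
  end.

Lemma count_step w : count id (step w) = count id w.
Proof.
move: (leqnn (size w)); move: {2}(size w) => n; elim: n w => [|n IH] w.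
  by case: w.
case: w => [|[] s] //= Hs.
  by rewrite IH.
case: s Hs => [|[] s] //= Hs.
  by rewrite IH //; lia.
by rewrite (IH (false :: s)) //=.
Qed.

Lemma H0 w : count id w = 0 -> H w = 0.
Proof.
elim: w => [|[] s IH] //= Hc.
by rewrite add0n in Hc; rewrite Hc.
Qed.

Lemma H_step w : H (step w) = (H w).-1.
Proof.
move: (leqnn (size w)); move: {2}(size w) => n; elim: n w => [|n IH] w.
  by case: w.
case: w => [|[] s] //= Hs.
  by rewrite IH.
case: s Hs => [|[] s] // Hs.
  rewrite [step _]/= [H (true :: _)]/= IH; last by move: Hs => /=; lia.
  rewrite count_step.
  case: eqP => Hc.
    by rewrite /= Hc (@H0 _ Hc).
  rewrite /=; case: (H s) => [|h] /=; lia.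
have Ht := IH (false :: s) Hs; have Hct := count_step (false :: s).
move: (step (false :: s)) Ht Hct => t Ht Hct.
rewrite /= Hct Ht /=.
case: eqP => Hc //.
lia.
Qed.

Lemma stable_true s : stable (true :: s) <-> stable s.
Proof.
split.
  case=> [[|a] [b E]].
    by case: b E.
  by exists a, b; case: E.
by case=> a [b E]; exists a.+1, b; rewrite E.
Qed.

Lemma stable_false s : stable (false :: s) <-> count id s = 0.
Proof.
split.
  case=> [[|a] [b E]] //.
  case: b E => //= b [->]; by rewrite count_nseq mul0n.
move=> Hc; exists 0, (size s).+1 => /=; congr cons.
elim: s Hc => [|[] s IH] //= Hc; by rewrite -IH.
Qed.

Lemma H_stable w : stable w <-> H w = 0.
Proof.
elim: w => [|[] s IH] /=.
- by split=> // _; exists 0, 0.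
- by rewrite stable_true.
- rewrite stable_false; case: eqP => Hc; first by [].
  split=> //; lia.
Qed.

Lemma H_iter k w : H (iter k step w) = H w - k.
Proof.
elim: k => [|k IH] /=; first by rewrite subn0.
by rewrite H_step IH subnS.
Qed.

Definition bump0 x := if x == 0 then 0 else x.+1.

Lemma max_bump0 (r : seq nat) f :
  \max_(i <- r) bump0 (f i) = bump0 (\max_(i <- r) f i).
Proof.
elim: r => [|i r IH]; first by rewrite !big_nil.
rewrite !big_cons IH /bump0.
case: (f i) => [|x]; case: (\max_(j <- r) f j) => [|y] //=.
by rewrite !maxnSS.
Qed.

Definition E (L : seq nat) :=
  \max_(i <- iota 0 (size L)) (if nth 0 L i == 0 then 0 else i + nth 0 L i).

Lemma E_cons a L : E (a :: L) = maxn (if a == 0 then 0 else a) (bump0 (E L)).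
Proof.
rewrite /E /= big_cons -(addn0 1) iotaDl big_map -max_bump0 /=.
congr maxn; apply: eq_bigr => i _ /=.
rewrite /bump0; case: (nth 0 L i) => [|x] //=; rewrite [i + x.+1]addnS /=; lia.
Qed.

Lemma E_oaz w : E (ones_after_zeros w) = H w.
Proof.
elim: w => [|[] s IH] /=; first by rewrite /E big_nil.
  by [].
rewrite E_cons IH /bump0.
have [Hc|Hc] := eqVneq (count id s) 0.
  by rewrite (@H0 _ Hc).
move/eqP: Hc => Hc.
have [Hh|Hh] := eqVneq (H s) 0.
  rewrite Hh /=; lia.
by [].
Qed.

Lemma inner_max i a : 0 < i ->
  \max_(j <- iota 1 a) (i + j - 1) = if a == 0 then 0 else i + a - 1.
Proof.
move=> Hi; elim: a => [|a IH]; first by rewrite big_nil.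
rewrite (_ : iota 1 a.+1 = iota 1 a ++ [:: 1 + a]); last by rewrite -[a.+1]addn1 iotaD.
rewrite big_cat big_seq1 IH /=.
case: eqP => _; lia.
Qed.

Lemma size_oaz w : size (ones_after_zeros w) = size w - count id w.
Proof.
elim: w => [|b s IH] //=; have := count_size id s; case: b => /=; lia.
Qed.

Lemma Depth_Yw w : Depth (Yw w) = H w.
Proof.
rewrite /Depth /Yw big_allpairs_dep /= -E_oaz /E -size_oaz.
rewrite -(addn0 1) iotaDl big_map.
apply: eq_bigr => i _.
rewrite inner_max // /ones_after /= add0n.
case: eqP => _ //; lia.
Qed.

Theorem proposition2p7 (n : nat) (w : seq bool) (hw : size w = n) :
  is_stab_time w (Depth (Yw w)).
Proof.
rewrite Depth_Yw; split.
  by apply/H_stable; rewrite H_iter subnn.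
move=> k Hk /H_stable; rewrite H_iter; lia.
Qed.
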